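(* Let $\mathcal{I}$ be a finite index set and, for each $i\in\mathcal{I}$, let $\mathcal{A}_i$ be a finite set with $|\mathcal{A}_i|\ge 2$. Let $\mathcal{Y}\subseteq\mathcal{I}$, let $h_i:\mathcal{A}_i\to(0,\infty)$ for $i\in\mathcal{Y}$, and let $\mathcal{B}\subseteq\prod_{i\in\mathcal{I}}\mathcal{A}_i$ be a set of configurations such that the projection $\mathbf{P}_{\mathcal{Y}}(\mathbf{x})=(x_i)_{i\in\mathcal{Y}}$ is injective on $\mathcal{B}$. For each $i\in\mathcal{Y}$ fix $\alpha_i\in\mathcal{A}_i$ and put $\mathcal{A}_i^-=\mathcal{A}_i\setminus\{\alpha_i\}$. Define $\boldsymbol{\Xi}(\mathbf{x}_{\mathcal{Y}})=\big(([\gamma=x_i])_{\gamma\in\mathcal{A}_i}\big)_{i\in\mathcal{Y}}\in\{0,1\}^{\sum_{i\in\mathcal{Y}}|\mathcal{A}_i|}$ and $\tilde{\boldsymbol{\Xi}}(\mathbf{x}_{\mathcal{Y}})=\big(([\gamma=x_i])_{\gamma\in\mathcal{A}_i^-}\big)_{i\in\mathcal{Y}}\in\{0,1\}^{\sum_{i\in\mathcal{Y}}|\mathcal{A}_i^-|}$, where $[P]$ is $1$ if $P$ holds and $0$ otherwise. Let $\boldsymbol{\lambda}$ have coordinates $\lambda_i^{(\alpha)}=\log h_i(\alpha)$ ($i\in\mathcal{Y},\alpha\in\mathcal{A}_i$) and $\tilde{\boldsymbol{\lambda}}$ have coordinates $\tilde\lambda_i^{(\alpha)}=\log\big(h_i(\alpha)/h_i(\alpha_i)\big)$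 ($i\in\mathcal{Y},\alpha\in\mathcal{A}_i^-$). Let $\mathcal{K}_{\mathcal{Y}}(\mathcal{B})$ be the convex hull of $\{\boldsymbol{\Xi}(\mathbf{P}_{\mathcal{Y}}(\mathbf{x})):\mathbf{x}\in\mathcal{B}\}$ and $\tilde{\mathcal{K}}_{\mathcal{Y}}(\mathcal{B})$ the convex hull of $\{\tilde{\boldsymbol{\Xi}}(\mathbf{P}_{\mathcal{Y}}(\mathbf{x})):\mathbf{x}\in\mathcal{B}\}$. Consider LP1: maximize $\boldsymbol{\lambda}\mathbf{g}^T$ over $\mathbf{g}\in\mathcal{K}_{\mathcal{Y}}(\mathcal{B})$, with output configuration $\mathbf{P}_{\mathcal{Y}}^{-1}(\boldsymbol{\Xi}^{-1}(\mathbf{g}_{\mathrm{opt}}))$ for the maximizer $\mathbf{g}_{\mathrm{opt}}$; and LP2: maximize $\tilde{\boldsymbol{\lambda}}\tilde{\mathbf{g}}^T$ over $\tilde{\mathbf{g}}\in\tilde{\mathcal{K}}_{\mathcal{Y}}(\mathcal{B})$, with output configuration $\mathbf{P}_{\mathcal{Y}}^{-1}(\tilde{\boldsymbol{\Xi}}^{-1}(\tilde{\mathbf{g}}_{\mathrm{opt}}))$ for the maximizer $\tilde{\mathbf{g}}_{\mathrm{opt}}$. Then LP2 produces the same (optimum) configuration output as LP1, namely a configuration $\mathbf{x}_{\mathrm{opt}}\in\mathcal{B}$ maximizing $\sum_{i\in\mathcal{Y}}\log h_i(x_i)$ over $\mathcal{B}$.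
   Context: This arises from the problem of maximizing a global function $u(\mathbf{x})=\prod_{i\in\mathcal{Y}}h_i(x_i)\prod_{j\in\mathcal{L}}[\mathbf{x}_j\in\mathcal{B}_j]$ over configurations $\mathbf{x}=(x_i)_{i\in\mathcal{I}}\in\prod_i\mathcal{A}_i$, where $\mathcal{Y}$ is the set of variables attached to degree-one (pendant) factor nodes of the factor graph, $h_i$ is the product of those pendant factors, and $\mathcal{B}$ is the set of configurations satisfying all non-pendant indicator factors; maximizing $u$ is equivalent to maximizing $\sum_{i\in\mathcal{Y}}\log h_i(x_i)$ over $\mathcal{B}$. $\mathbf{P}_{\mathcal{Y}}^{-1}$ denotes the inverse of $\mathbf{P}_{\mathcal{Y}}$ restricted to $\mathcal{B}$. *)

(* Defs.v *)
From HB Require Import structures.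
From mathcomp Require Import all_boot all_order all_algebra.
From mathcomp Require Import all_classical all_reals all_analysis.
Set Implicit Arguments. Unset Strict Implicit. Unset Printing Implicit Defensive.
Import Order.TTheory GRing.Theory Num.Theory.
Local Open Scope ring_scope.

Section Defs.
Variables (R : realType) (I : finType) (A : I -> finType) (Y : {set I}).

Definition config := {dffun forall i : I, A i}.

Definition Yt := {i : I | i \in Y}.

Definition configY := forall i : Yt, A (val i).

Definition PY (x : config) : configY := fun i => x (val i).

Definition coordJ := {i : Yt & A (val i)}.

(* coordinates of tilde Xi: pairs (i, gamma), i in Y, gamma in A_i^- = A_i \ {alpha_i} *)
Definition coordJt (alpha : forall i : Yt, A (val i)) :=
  {j : coordJ | tagged j != alpha (tag j)}.

Definition Xi (xY : configY) : coordJ -> R :=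
  fun j => if tagged j == xY (tag j) then 1 else 0.

Definition Xit (alpha : forall i : Yt, A (val i)) (xY : configY)
  : coordJt alpha -> R := fun j => Xi xY (val j).

Definition lam (h : forall i : Yt, A (val i) -> R) : coordJ -> R :=
  fun j => ln (h (tag j) (tagged j)).

Definition lamt (h : forall i : Yt, A (val i) -> R)
  (alpha : forall i : Yt, A (val i)) : coordJt alpha -> R :=
  fun j => ln (h (tag (val j)) (tagged (val j)) / h (tag (val j)) (alpha (tag (val j)))).

End Defs.

Arguments PY {I A} Y x i.
Arguments Xi R {I A Y} xY j.
Arguments Xit R {I A Y} alpha xY j.
Arguments lam {R I A Y} h j.
Arguments lamt {R I A Y} h alpha j.

Definition conv_hull (R : realType) (C J : finType) (S : {set C}) (f : C -> J -> R)
  : set (J -> R) :=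
  fun g => exists w : C -> R,
    [/\ forall c, 0 <= w c,
        forall c, c \notin S -> w c = 0,
        \sum_(c : C) w c = 1
      & forall j, g j = \sum_(c : C) w c * f c j].

Definition dotv (R : realType) (J : finType) (lam g : J -> R) : R :=
  \sum_(j : J) lam j * g j.

Definition is_lp_max (R : realType) (J : finType) (K : set (J -> R)) (lam g : J -> R) :=
  K g /\ forall g', K g' -> dotv lam g' <= dotv lam g.

Definition KY (R : realType) (I : finType) (A : I -> finType) (Y : {set I})
  (B : {set config A}) : set (coordJ A Y -> R) :=
  conv_hull B (fun x => @Xi R I A Y (PY Y x)).

Definition KtY (R : realType) (I : finType) (A : I -> finType) (Y : {set I})
  (alpha : forall i : Yt Y, A (val i)) (B : {set config A})
  : set (coordJt alpha -> R) :=
  conv_hull B (fun x => @Xit R I A Y alpha (PY Y x)).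

(* Main.v *)
Require Import Defs.
From HB Require Import structures.
From mathcomp Require Import all_boot all_order all_algebra.
From mathcomp Require Import all_classical all_reals all_analysis.
Import Order.TTheory GRing.Theory Num.Theory.
Local Open Scope ring_scope.

Lemma hull_max (R : realType) (C J : finType) (B : {set C}) (f : C -> J -> R)
  (l : J -> R) (x : C) : x \in B ->
  is_lp_max (conv_hull B f) l (f x) <->
  (forall x', x' \in B -> dotv l (f x') <= dotv l (f x)).
Proof.
move=> xB.
have inh : forall y, y \in B -> conv_hull B f (f y).
  move=> y yB; exists (fun c => (c == y)%:R); split.
  - by move=> c; rewrite ler0n.
  - by move=> c cB; case: eqP => // ey; rewrite ey yB in cB.
  - by rewrite (bigD1 y) //= eqxx big1 ?addr0 // => c /negPf ->.
  - move=> j; rewrite (bigD1 y) //= eqxx mul1r big1 ?addr0 //.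
    by move=> c /negPf ->; rewrite mul0r.
split.
  by case=> _ H x' x'B; apply: H; apply: inh.
move=> H; split; first exact: inh.
move=> g [w [w0 wB w1 wg]].
have -> : dotv l g = \sum_c w c * dotv l (f c).
  rewrite /dotv; under eq_bigr => j _ do rewrite wg mulr_sumr.
  rewrite exchange_big /=; apply: eq_bigr => c _; rewrite mulr_sumr.
  by apply: eq_bigr => j _; rewrite mulrCA.
apply: (@le_trans _ _ (\sum_c w c * dotv l (f x))).
  apply: ler_sum => c _; case: (boolP (c \in B)) => cB.
    by apply: ler_wpM2l => //; apply: H.
  by rewrite wB // !mul0r.
by rewrite -mulr_suml w1 mul1r.
Qed.

Lemma dot_Xi (R : realType) (I : finType) (A : I -> finType) (Y : {set I})
  (G : forall i : Yt Y, A (val i) -> R) (xY : configY A Y) :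
  \sum_(j : coordJ A Y) G (tag j) (tagged j) * Xi R xY j = \sum_i G i (xY i).
Proof.
rewrite -(sig_big_dep (fun _ => true) (fun _ _ => true) (fun i a => G i a * Xi R xY (Tagged (fun i : Yt Y => A (val i)) a))) /=.
apply: eq_bigr => i _; rewrite (bigD1 (xY i)) //= /Xi /= eqxx mulr1 big1 ?addr0 //.
by move=> a /negPf ->; rewrite mulr0.
Qed.

Lemma dot_Xit (R : realType) (I : finType) (A : I -> finType) (Y : {set I})
  (h : forall i : Yt Y, A (val i) -> R)
  (hpos : forall (i : Yt Y) (a : A (val i)), 0 < h i a)
  (alpha : forall i : Yt Y, A (val i)) (xY : configY A Y) :
  dotv (lamt h alpha) (Xit R alpha xY) = \sum_i (ln (h i (xY i)) - ln (h i (alpha i))).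
Proof.
rewrite -(@dot_Xi R I A Y (fun i a => ln (h i a) - ln (h i (alpha i)))).
pose F := fun j : coordJ A Y => (ln (h (tag j) (tagged j)) - ln (h (tag j) (alpha (tag j)))) * Xi R xY j.
have := @big_sub R 0 _ (coordJ A Y) [pred j : coordJ A Y | tagged j != alpha (tag j)] F.
rewrite /dotv /= => E.
transitivity (\sum_(j in [pred j : coordJ A Y | tagged j != alpha (tag j)]) F j).
  rewrite E; apply: eq_bigr => j _.
  by rewrite /F /lamt /Xit ln_div ?posrE ?hpos.
rewrite big_mkcond /=; apply: eq_bigr => j _.
rewrite inE /=; case: eqP => [e|] //=.
by rewrite /F e subrr mul0r.
Qed.

Lemma Xit_inj (R : realType) (I : finType) (A : I -> finType) (Y : {set I})
  (alpha : forall i : Yt Y, A (val i)) (xY xY' : configY A Y) :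
  Xit R alpha xY = Xit R alpha xY' -> xY = xY'.
Proof.
move=> E.
have key : forall u v : configY A Y, Xit R alpha u = Xit R alpha v ->
    forall i, u i != alpha i -> v i = u i.
  move=> u v Euv i ni.
  pose j : coordJt alpha := exist _ (Tagged (fun i : Yt Y => A (val i)) (u i)) ni.
  have := congr1 (fun f => f j) Euv; rewrite /Xit /Xi /= eqxx.
  case: eqP => [->//|_]. by move/eqP; rewrite oner_eq0.
apply: (@boolp.functional_extensionality_dep _ _ xY xY') => i.
case: (eqVneq (xY i) (alpha i)) => [e|n]; last by rewrite (key _ _ E).
case: (eqVneq (xY' i) (alpha i)) => [e'|n']; first by rewrite e e'.
by rewrite -(key _ _ (esym E)).
Qed.

Theorem proposition1 (R : realType) (I : finType) (A : I -> finType)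
  (HA : forall i : I, (1 < #|A i|)%N)
  (Y : {set I})
  (h : forall i : Yt Y, A (val i) -> R)
  (hpos : forall (i : Yt Y) (a : A (val i)), 0 < h i a)
  (B : {set config A})
  (Hinj : forall x x' : config A, x \in B -> x' \in B -> PY Y x = PY Y x' -> x = x')
  (alpha : forall i : Yt Y, A (val i)) :
  (forall x x' : config A, x \in B -> x' \in B ->
     Xit R alpha (PY Y x) = Xit R alpha (PY Y x') -> x = x') /\
  (forall x : config A, x \in B ->
    (is_lp_max (@KY R I A Y B) (lam h) (Xi R (PY Y x)) <->
     is_lp_max (@KtY R I A Y alpha B) (lamt h alpha) (Xit R alpha (PY Y x))) /\
    (is_lp_max (@KtY R I A Y alpha B) (lamt h alpha) (Xit R alpha (PY Y x)) <->
     forall x' : config A, x' \in B ->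
       \sum_(i : Yt Y) ln (h i (x' (val i))) <= \sum_(i : Yt Y) ln (h i (x (val i))))).
Proof.
split.
  by move=> x x' xB x'B E; apply: Hinj => //; apply: Xit_inj E.
pose S := fun x : config A => \sum_(i : Yt Y) ln (h i (x (val i))).
have d1 : forall x, dotv (lam h) (Xi R (PY Y x)) = S x.
  by move=> x; rewrite /dotv (@dot_Xi R I A Y (fun i a => ln (h i a))).
have d2 : forall x, dotv (lamt h alpha) (Xit R alpha (PY Y x)) =
    S x - \sum_i ln (h i (alpha i)).
  by move=> x; rewrite dot_Xit // sumrB.
move=> x xB.
have e2 : is_lp_max (@KtY R I A Y alpha B) (lamt h alpha) (Xit R alpha (PY Y x)) <->
     forall x' : config A, x' \in B -> S x' <= S x.
  rewrite /KtY hull_max //; split=> H x' x'B; have := H x' x'B; rewrite !d2.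
    by rewrite lerD2r.
  by rewrite lerD2r.
split; last exact: e2.
rewrite e2 /KY hull_max //; split=> H x' x'B; have := H x' x'B; by rewrite !d1.
Qed.
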